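(* Let $f_1,f_2:\mathbb R^d\to\mathbb R$ be convex with $\nabla f_i$ globally Lipschitz continuous with modulus $L_i>0$ ($i=1,2$), let $f_3:\mathbb R^d\to\mathbb R\cup\{+\infty\}$ be proper and lower semicontinuous, and assume $\varphi:=f_1+f_2+f_3$ has a nonempty set of minimizers. Let $\alpha>0$ and $\gamma\in(0,\frac{1}{L_1+L_2})$. Then the relaxed Ryu envelope $\varphi_\gamma^{\mathrm{Ryu}}:\mathbb R^d\times\mathbb R^d\to\mathbb R\cup\{\pm\infty\}$ is real-valued and locally Lipschitz continuous.
   Context: For $h:\mathbb R^d\to\mathbb R\cup\{+\infty\}$ and $\gamma>0$, $\mathrm{prox}_{\gamma h}(z):=\operatorname{argmin}_{y}\{h(y)+\frac{1}{2\gamma}\|y-z\|^2\}$. Set $\gamma_1=\gamma/\alpha$, $\gamma_2=\gamma/(1-\alpha)$, with conventions $\frac{c}{0}=\infty$, $\frac{d}{\infty}=0$ ($c>0,d\in\mathbb R$). For $(z_1,z_2)\in\mathbb R^d\times\mathbb R^d$, let $x_1=\mathrm{prox}_{\gamma f_1}(z_1)$ and $x_2=\mathrm{prox}_{\frac{\gamma}{\alpha}f_2}(\frac{z_2}{\alpha}+x_1)$, and define the relaxed Ryu envelope $$\varphi_\gamma^{\mathrm{Ryu}}(z_1,z_2):=\min_{y\in\mathbb R^d}\Big\{f_3(y)+\sum_{i=1}^2\Big[f_i(x_i)+\langle y-x_i,\nabla f_i(x_i)\rangle+\frac{1}{2\gamma_i}\|y-x_i\|^2\Big]\Big\}.$$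 *)

(* Defs.v *)
From HB Require Import structures.
From mathcomp Require Import all_boot all_order all_algebra.
From mathcomp Require Import all_classical all_reals all_analysis.
Set Implicit Arguments. Unset Strict Implicit. Unset Printing Implicit Defensive.
Import Order.TTheory GRing.Theory Num.Theory.
Import numFieldNormedType.Exports.
Local Open Scope ring_scope.
Local Open Scope classical_set_scope.

Section Defs.
Variables (R : realType) (d : nat).
Local Notation V := 'rV[R]_d.

Definition inner (u v : V) : R := \sum_(i < d) u 0 i * v 0 i.
Definition enorm (u : V) : R := Num.sqrt (inner u u).

Definition enorm2 (u : V * V) : R := Num.sqrt (inner u.1 u.1 + inner u.2 u.2).

Definition is_gradient (f : V -> R) (g : V -> V) : Prop :=
  forall x, differentiable f x /\ forall h, ('d f x) h = inner h (g x).

Definition lipschitz_with (g : V -> V) (L : R) : Prop :=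
  forall x y, enorm (g x - g y) <= L * enorm (x - y).

Definition proper_fun (h : V -> \bar R) : Prop :=
  (forall x, h x != -oo%E) /\ (exists x, h x \is a fin_num).

Definition prox (gamma : R) (h : V -> R) (z : V) : V :=
  xget 0 [set y | forall w, h y + (2 * gamma)^-1 * enorm (y - z) ^+ 2
                            <= h w + (2 * gamma)^-1 * enorm (w - z) ^+ 2].

(* With gamma1 = gamma/alpha, gamma2 = gamma/(1-alpha)
   and the conventions c/0 = oo, d/oo = 0, the coefficients 1/(2 gamma_i)
   are alpha/(2 gamma) and (1-alpha)/(2 gamma). The min over y is written
   as an infimum in \bar R. *)
Definition ryu_env (f1 f2 : V -> R) (f3 : V -> \bar R) (g1 g2 : V -> V)
    (alpha gamma : R) (z : V * V) : \bar R :=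
  let x1 := prox gamma f1 z.1 in
  let x2 := prox (gamma / alpha) f2 (alpha^-1 *: z.2 + x1) in
  ereal_inf [set (f3 y + (f1 x1 + inner (y - x1) (g1 x1)
                           + alpha / (2 * gamma) * enorm (y - x1) ^+ 2
                        + (f2 x2 + inner (y - x2) (g2 x2)
                           + (1 - alpha) / (2 * gamma) * enorm (y - x2) ^+ 2))%:E)%E
            | y in [set: V]].

Definition locally_lipschitz (F : V * V -> R) : Prop :=
  forall z, exists r, exists L, 0 < r /\
    forall u v, enorm2 (u - z) < r -> enorm2 (v - z) < r ->
      `|F u - F v| <= L * enorm2 (u - v).

End Defs.

(* Main.v *)
Require Import Defs.
From HB Require Import structures.
From mathcomp Require Import all_boot all_order all_algebra.
From mathcomp Require Import all_classical all_reals all_analysis.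
From mathcomp Require Import ring lra.
Import Order.TTheory GRing.Theory Num.Theory.
Import numFieldNormedType.Exports.
Set Implicit Arguments. Unset Strict Implicit. Unset Printing Implicit Defensive.
Local Open Scope ring_scope.
Local Open Scope classical_set_scope.

Section Inner.
Variables (R : realType) (d : nat).
Local Notation V := 'rV[R]_d.
Implicit Types u v w : V.

Lemma innerC u v : inner u v = inner v u.
Proof. by apply: eq_bigr => i _; rewrite mulrC. Qed.

Lemma innerDl u v w : inner (u + v) w = inner u w + inner v w.
Proof. by rewrite /inner -big_split; apply: eq_bigr => i _; rewrite !mxE mulrDl. Qed.

Lemma innerZl (a : R) u v : inner (a *: u) v = a * inner u v.
Proof. by rewrite /inner mulr_sumr; apply: eq_bigr => i _; rewrite !mxE mulrA. Qed.

Lemma innerNl u v : inner (- u) v = - inner u v.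
Proof. by rewrite -scaleN1r innerZl mulN1r. Qed.

Lemma innerBl u v w : inner (u - v) w = inner u w - inner v w.
Proof. by rewrite innerDl innerNl. Qed.

Lemma innerDr u v w : inner w (u + v) = inner w u + inner w v.
Proof. by rewrite innerC innerDl !(innerC w). Qed.

Lemma innerZr (a : R) u v : inner v (a *: u) = a * inner v u.
Proof. by rewrite innerC innerZl innerC. Qed.

Lemma innerNr u v : inner v (- u) = - inner v u.
Proof. by rewrite innerC innerNl innerC. Qed.

Lemma innerBr u v w : inner w (u - v) = inner w u - inner w v.
Proof. by rewrite innerDr innerNr. Qed.

Lemma inner0l v : inner 0 v = 0.
Proof. by rewrite -(scale0r 0) innerZl mul0r. Qed.

Lemma inner0r v : inner v 0 = 0.
Proof. by rewrite innerC inner0l. Qed.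

Lemma inner_ge0 u : 0 <= inner u u.
Proof. by apply: sumr_ge0 => i _; rewrite -expr2 sqr_ge0. Qed.

Lemma enorm_ge0 u : 0 <= enorm u.
Proof. exact: sqrtr_ge0. Qed.

Lemma enorm_sq u : enorm u ^+ 2 = inner u u.
Proof. by rewrite /enorm sqr_sqrtr // inner_ge0. Qed.

Lemma CS2 u v : inner u v ^+ 2 <= inner u u * inner v v.
Proof.
have HK : inner u u * inner v v - inner u v ^+ 2 =
  2^-1 * \sum_(i < d) \sum_(j < d) (u 0 i * v 0 j - u 0 j * v 0 i) ^+ 2.
  have E1 : \sum_(i < d) \sum_(j < d) (u 0 i * v 0 j - u 0 j * v 0 i) ^+ 2 =
    \sum_(i < d) \sum_(j < d) (u 0 i * u 0 i * (v 0 j * v 0 j)) +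
    \sum_(i < d) \sum_(j < d) (u 0 j * u 0 j * (v 0 i * v 0 i)) -
    2 * \sum_(i < d) \sum_(j < d) (u 0 i * v 0 i * (u 0 j * v 0 j)).
    rewrite mulr_sumr -!big_split -sumrB; apply: eq_bigr => i _.
    rewrite mulr_sumr -!big_split -sumrB; apply: eq_bigr => j _ /=.
    ring.
  have E2 : \sum_(i < d) \sum_(j < d) (u 0 j * u 0 j * (v 0 i * v 0 i)) =
    \sum_(i < d) \sum_(j < d) (u 0 i * u 0 i * (v 0 j * v 0 j)).
    by rewrite exchange_big.
  rewrite E1 E2 /inner expr2 !mulr_suml.
  under eq_bigr do rewrite mulr_sumr.
  under [X in _ - X]eq_bigr do rewrite mulr_sumr.
  set A := \sum_(i < d) _; set B := \sum_(i < d) _.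
  have -> : B = \sum_(i < d) \sum_(j < d) (u 0 i * v 0 i * (u 0 j * v 0 j)) by [].
  by rewrite -/A; field.
have : 0 <= inner u u * inner v v - inner u v ^+ 2.
  rewrite HK mulr_ge0 ?invr_ge0 ?ler0n //.
  by apply: sumr_ge0 => i _; apply: sumr_ge0 => j _; apply: sqr_ge0.
by rewrite subr_ge0.
Qed.


Lemma CS u v : `|inner u v| <= enorm u * enorm v.
Proof.
rewrite /enorm -sqrtrM ?inner_ge0 // -sqrtr_sqr ler_sqrt ?mulr_ge0 ?inner_ge0 //.
exact: CS2.
Qed.

Lemma CS' u v : inner u v <= enorm u * enorm v.
Proof. exact: le_trans (ler_norm _) (CS u v). Qed.

Lemma innerDD u v : inner (u + v) (u + v) = inner u u + 2 * inner u v + inner v v.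
Proof. rewrite !innerDl !innerDr (innerC v u); ring. Qed.

Lemma innerBB u v : inner (u - v) (u - v) = inner u u - 2 * inner u v + inner v v.
Proof. rewrite !innerBl !innerBr (innerC v u); ring. Qed.

Lemma enormD u v : enorm (u + v) <= enorm u + enorm v.
Proof.
rewrite {1}/enorm -(@ger0_norm _ (enorm u + enorm v)); last by rewrite addr_ge0 ?enorm_ge0.
rewrite -sqrtr_sqr ler_sqrt; last by rewrite sqr_ge0.
rewrite innerDD sqrrD !enorm_sq.
have := CS' u v; lra.
Qed.

Lemma enormZ (a : R) u : enorm (a *: u) = `|a| * enorm u.
Proof.
by rewrite /enorm innerZl innerZr mulrA -expr2 sqrtrM ?sqr_ge0 // sqrtr_sqr.
Qed.

Lemma enormN u : enorm (- u) = enorm u.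
Proof. by rewrite -scaleN1r enormZ normrN1 mul1r. Qed.

Lemma enormB u v : enorm (u - v) = enorm (v - u).
Proof. by rewrite -enormN opprB. Qed.

Lemma enorm0 : enorm (0 : V) = 0.
Proof. by rewrite /enorm inner0l sqrtr0. Qed.

Lemma enormBle u v : enorm u <= enorm v + enorm (u - v).
Proof. by have := enormD v (u - v); rewrite addrC subrK addrC. Qed.

Lemma inner_sqB u v : inner u u - inner v v = inner (u - v) (u + v).
Proof. rewrite innerBl !innerDr (innerC v u); ring. Qed.

Lemma coord_le_enorm u i : `|u 0 i| <= enorm u.
Proof.
rewrite /enorm -sqrtr_sqr ler_sqrt ?inner_ge0 // /inner (bigD1 i) //= -expr2.
rewrite lerDl; apply: sumr_ge0 => j _; rewrite -expr2; exact: sqr_ge0.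
Qed.

Lemma mxnorm_le_enorm u : `|u| <= enorm u.
Proof.
rewrite /Num.norm /= mx_normrE; apply: bigmax_le; first exact: enorm_ge0.
by move=> [i j] _ /=; rewrite (ord1 i); exact: coord_le_enorm.
Qed.

Lemma enorm2_ge0 (z : V * V) : 0 <= enorm2 z.
Proof. exact: sqrtr_ge0. Qed.

Lemma enorm2_1 (z : V * V) : enorm z.1 <= enorm2 z.
Proof. by rewrite ler_sqrt ?lerDl ?inner_ge0 // addr_ge0 ?inner_ge0. Qed.

Lemma enorm2_2 (z : V * V) : enorm z.2 <= enorm2 z.
Proof. by rewrite ler_sqrt ?lerDr ?inner_ge0 // addr_ge0 ?inner_ge0. Qed.

Lemma enorm2_0 : enorm2 (0 : V * V) = 0.
Proof. by rewrite /enorm2 /= inner0l addr0 sqrtr0. Qed.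

End Inner.



Section Conv.
Variables (R : realType) (d : nat).
Local Notation V := 'rV[R]_d.
Implicit Types u v w x y : V.

Lemma convexP (f : V -> R) : convex_function setT f ->
  forall (t : R) x y, 0 <= t -> t <= 1 ->
  f (t *: x + (1 - t) *: y) <= t * f x + (1 - t) * f y.
Proof.
move=> cf t x y t0 t1; have := cf (Itv01 t0 t1) x y.
rewrite !inE => /(_ I I) /=.
done.
Qed.

Lemma grad_ineq (f : V -> R) g : convex_function setT f -> is_gradient f g ->
  forall x y, f x + inner (y - x) (g x) <= f y.
Proof.
move=> cf gf x y; set v := y - x.
have [dfx dfe] := gf x.
have der : derivable f x v by exact: diff_derivable.
have Dv : 'D_v f x = inner v (g x) by rewrite deriveE // dfe.
have cv : (fun h : R => h^-1 *: ((f \o shift x) (h *: v) - f x)) @ 0^' --> inner v (g x).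
  by rewrite -Dv; exact: der.
rewrite -lerBrDl leNgt; apply/negP => H.
have e0 : 0 < inner v (g x) - (f y - f x) by rewrite subr_gt0.
move/cvgrPdist_lt: cv => /(_ _ e0).
rewrite near_withinE => /nbhs_ballP [del del0 Hdel].
pose h := Num.min (del / 2) (1 / 2).
have h0 : 0 < h by rewrite lt_min !divr_gt0.
have hd : h < del by rewrite gt_min; apply/orP; left; rewrite ltr_pdivrMr // ltr_pMr //; lra.
have h1 : h <= 1 / 2 by rewrite ge_min lexx orbT.
have := Hdel h.
rewrite /ball /= sub0r normrN ger0_norm ?ltW // => /(_ hd (lt0r_neq0 h0)).
have h1' : h <= 1 by apply: (le_trans h1); lra.
have conv := convexP cf y x (ltW h0) h1'.
move=> H2; move: H2; set Q := (X in `|_ - X| < _) => H2.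
have EQ : Q = h^-1 * (f (h *: y + (1 - h) *: x) - f x).
  rewrite /Q /comp /shift /=; congr (_ * (f _ - _)).
  by rewrite /v scalerBr scalerBl scale1r addrAC -addrA.
have H3 : h^-1 * (f (h *: y + (1 - h) *: x) - f x) <= f y - f x.
  rewrite ler_pdivrMl //.
  lra.
have := ler_norm (inner v (g x) - Q).
rewrite EQ in H2 *.
lra.
Qed.
End Conv.



Section Prox.
Variables (R : realType) (d : nat).
Local Notation V := 'rV[R]_d.
Implicit Types u v w x y z : V.

Lemma inner_cont : continuous (fun u : V => inner u u).
Proof.
have -> : (fun u : V => inner u u) = \sum_(i < d) (fun u : V => u 0 i * u 0 i).
  by rewrite fct_sumE; apply/funext => u.
move=> u; apply: differentiable_continuous; apply: differentiable_sum => i.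
exact: (@differentiableM _ _ (fun u : V => u 0 i) (fun u : V => u 0 i) u
  (differentiable_coord _ _ _) (differentiable_coord _ _ _)).
Qed.

Lemma sqdist_cont z : continuous (fun y : V => enorm (y - z) ^+ 2).
Proof.
have -> : (fun y : V => enorm (y - z) ^+ 2) = (fun u => inner u u) \o (fun y => y - z).
  by apply/funext => y; rewrite /= enorm_sq.
move=> y; apply: (@continuous_comp _ _ _ (fun y : V => y - z) (fun u : V => inner u u)); last exact: inner_cont.
by apply: (@continuousB _ _ _ id (cst z)) => //; exact: cst_continuous.
Qed.

Lemma eps_le (a b K : R) : 0 <= K -> (forall t, 0 < t -> t <= 1 -> a <= b + t * K) -> a <= b.
Proof.
move=> K0 H; rewrite leNgt; apply/negP => ab.
pose s := (a - b) / (2 * K + 2).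
have s0 : 0 < s by rewrite /s divr_gt0 // ?subr_gt0 //; lra.
have sE : s * (2 * K + 2) = a - b by rewrite /s mulfVK //; lra.
pose t := Num.min 1 s.
have t0 : 0 < t by rewrite lt_min ltr01 s0.
have t1 : t <= 1 by rewrite ge_min lexx.
have ts : t <= s by rewrite ge_min lexx orbT.
have := H t t0 t1.
have : t * K <= s * K by rewrite ler_wpM2r.
nra.
Qed.

Variables (f : V -> R) (g : V -> V).
Hypotheses (cf : convex_function setT f) (gf : is_gradient f g).

Lemma f_cont : continuous f.
Proof. by move=> x; apply: differentiable_continuous; case: (gf x). Qed.

Lemma prox_ex (lam : R) z : 0 < lam -> exists y, forall w,
  f y + (2 * lam)^-1 * enorm (y - z) ^+ 2 <= f w + (2 * lam)^-1 * enorm (w - z) ^+ 2.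
Proof.
move=> lam0.
set h := fun y => f y + (2 * lam)^-1 * enorm (y - z) ^+ 2.
have hc : continuous h.
  move=> y; apply: (@continuousD _ _ _ f (fun y => (2 * lam)^-1 * enorm (y - z) ^+ 2)).
    exact: f_cont.
  apply: (@continuousM _ _ (cst (2 * lam)^-1) (fun y => enorm (y - z) ^+ 2)).
    exact: cst_continuous.
  exact: sqdist_cont.
set A := [set y | h y <= h z].
have Az : A z by rewrite /A /= lexx.
have Acl : closed A.
  have := (continuous_closedP h).1 hc [set x | x <= h z].
  by apply; exact: (@closed_le R (h z)).
have Abd : bounded_set A.
  exists (enorm z + 2 * lam * enorm (g z)); split; first by rewrite num_real.
  move=> M HM y Ay; apply: ltW; apply: le_lt_trans HM.
  apply: le_trans (mxnorm_le_enorm y) _.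
  apply: le_trans (enormBle y z) _; rewrite lerD2l.
  have gi := grad_ineq cf gf z y.
  have /andP[cs1 cs2] : - (enorm (y - z) * enorm (g z)) <= inner (y - z) (g z)
      <= enorm (y - z) * enorm (g z) by rewrite -ler_norml; exact: CS.
  move: Ay; rewrite /A /h /= subrr enorm0 expr0n /= mulr0 addr0 => Ay.
  have e0 := enorm_ge0 (y - z).
  have G0 := enorm_ge0 (g z).
  have HH : enorm (y - z) ^+ 2 <= 2 * lam * enorm (y - z) * enorm (g z).
    have : (2 * lam)^-1 * enorm (y - z) ^+ 2 <= enorm (y - z) * enorm (g z).
      lra.
    have l2 : 0 < 2 * lam by rewrite mulr_gt0.
    move=> H1; have := ler_wpM2l (ltW l2) H1.
    by rewrite mulrA mulfV ?mul1r ?mulrA // gt_eqF.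
  have K0 : 0 <= 2 * lam * enorm (g z) by rewrite mulr_ge0 // mulr_ge0 // ltW.
  have HH2 : enorm (y - z) ^+ 2 <= (2 * lam * enorm (g z)) * enorm (y - z).
    by apply: (le_trans HH); rewrite le_eqVlt; apply/orP; left; apply/eqP; ring.
  move: HH2 K0; set K := 2 * lam * enorm (g z); set e := enorm (y - z) => HH3 K0.
  rewrite leNgt; apply/negP => Ke.
  have : K * e < e * e by rewrite ltr_pM2r //; apply: le_lt_trans Ke.
  rewrite -expr2 mulrC. lra.
have Acp : compact A by exact: bounded_closed_compact.
have [c /set_mem Ac cmin] := compact_EVT_min (ex_intro _ z Az) Acp
  (continuous_subspaceT hc).
exists c => w.
have [Aw|nAw] := pselect (A w); first exact: cmin (mem_set Aw).
apply: le_trans Ac _; rewrite /A /= in nAw.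
by apply: ltW; rewrite ltNge; apply/negP.
Qed.


Lemma prox_min (lam : R) z : 0 < lam -> forall w,
  f (prox lam f z) + (2 * lam)^-1 * enorm (prox lam f z - z) ^+ 2
  <= f w + (2 * lam)^-1 * enorm (w - z) ^+ 2.
Proof.
move=> lam0; rewrite /prox.
have [y Hy] := prox_ex z lam0.
pose P := [set y : V | forall w, f y + (2 * lam)^-1 * enorm (y - z) ^+ 2
   <= f w + (2 * lam)^-1 * enorm (w - z) ^+ 2].
exact: (@xgetI _ 0 P y Hy).
Qed.

Lemma min_vi (lam : R) z y : 0 < lam ->
  (forall w, f y + (2 * lam)^-1 * enorm (y - z) ^+ 2
             <= f w + (2 * lam)^-1 * enorm (w - z) ^+ 2) ->
  forall w, f y - f w <= lam^-1 * inner (y - z) (w - y).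
Proof.
move=> lam0 Hy w.
have c0 : 0 < (2 * lam)^-1 by rewrite invr_gt0 mulr_gt0.
apply: (@eps_le _ _ ((2 * lam)^-1 * inner (w - y) (w - y))).
  by rewrite mulr_ge0 ?inner_ge0 // ltW.
move=> t t0 t1.
have := Hy (t *: w + (1 - t) *: y).
have cv := convexP cf w y (ltW t0) t1.
have -> : t *: w + (1 - t) *: y - z = (y - z) + t *: (w - y).
  by apply/rowP => i; rewrite !mxE; ring.
rewrite !enorm_sq (innerDD (y - z) (t *: (w - y))) innerZl !innerZr.
set P := inner (y - z) (y - z); set Q := inner (y - z) (w - y);
set S := inner (w - y) (w - y).
move=> H.
have H2 : t * (f y - f w) <= t * (lam^-1 * Q + t * ((2 * lam)^-1 * S)).
  have E : (2 * lam)^-1 * (P + 2 * (t * Q) + t * (t * S)) =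
           (2 * lam)^-1 * P + t * (lam^-1 * Q) + t * (t * ((2 * lam)^-1 * S)).
    by field; rewrite gt_eqF.
  rewrite E in H.
  lra.
by rewrite ler_pM2l // in H2.
Qed.

Lemma prox_vi (lam : R) z : 0 < lam -> forall w,
  f (prox lam f z) - f w <= lam^-1 * inner (prox lam f z - z) (w - prox lam f z).
Proof. by move=> lam0; apply: min_vi => //; exact: prox_min. Qed.

Lemma prox_nonexp (lam : R) z1 z2 : 0 < lam ->
  enorm (prox lam f z1 - prox lam f z2) <= enorm (z1 - z2).
Proof.
move=> lam0.
set y1 := prox lam f z1; set y2 := prox lam f z2.
have H1 := prox_vi z1 lam0 y2; have H2 := prox_vi z2 lam0 y1.
rewrite -/y1 -/y2 in H1 H2.
have H : 0 <= lam^-1 * (inner (y1 - z1) (y2 - y1) + inner (y2 - z2) (y1 - y2)).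
  rewrite mulrDr; lra.
rewrite pmulr_rge0 ?invr_gt0 // in H.
have E : inner (y1 - z1) (y2 - y1) + inner (y2 - z2) (y1 - y2) =
  inner (z1 - z2) (y1 - y2) - inner (y1 - y2) (y1 - y2).
  rewrite !innerBl !innerBr !(innerC z1) !(innerC z2) !(innerC y2 y1); ring.
rewrite E subr_ge0 in H.
have cs := CS' (z1 - z2) (y1 - y2).
rewrite -enorm_sq in H.
have e0 := enorm_ge0 (y1 - y2); have e1 := enorm_ge0 (z1 - z2).
move: H cs e0 e1; set a := enorm (y1 - y2); set b := enorm (z1 - z2) => H cs e0 e1.
rewrite leNgt; apply/negP => ba.
have : b * a < a * a by rewrite ltr_pM2r //; apply: le_lt_trans ba.
rewrite -expr2; lra.
Qed.

Lemma f_lip (L : R) : 0 <= L -> lipschitz_with g L -> forall a b,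
  `|f a - f b| <= (enorm (g 0) + L * (enorm a + enorm b)) * enorm (a - b).
Proof.
move=> L0 Lg a b.
have gb : forall c, enorm (g c) <= enorm (g 0) + L * enorm c.
  move=> c; apply: le_trans (enormBle (g c) (g 0)) _; rewrite lerD2l.
  by have := Lg c 0; rewrite subr0.
set K := enorm (g 0) + L * (enorm a + enorm b).
have Ka : enorm (g a) <= K.
  apply: (le_trans (gb a)); rewrite lerD2l ler_wpM2l // lerDl; exact: enorm_ge0.
have Kb : enorm (g b) <= K.
  apply: (le_trans (gb b)); rewrite lerD2l ler_wpM2l // lerDr; exact: enorm_ge0.
have hab := grad_ineq cf gf a b; have hba := grad_ineq cf gf b a.
have c1 := CS' (a - b) (g a); have c2 := CS' (b - a) (g b).
rewrite enormB in c2.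
have n0 := enorm_ge0 (a - b).
have ha : inner (b - a) (g a) = - inner (a - b) (g a) by rewrite -innerNl opprB.
rewrite ha in hab.
have hb : inner (a - b) (g b) = - inner (b - a) (g b) by rewrite -innerNl opprB.
rewrite hb in hba.
have k1 : enorm (a - b) * enorm (g a) <= enorm (a - b) * K by rewrite ler_wpM2l.
have k2 : enorm (a - b) * enorm (g b) <= enorm (a - b) * K by rewrite ler_wpM2l.
rewrite ler_norml; apply/andP; split; rewrite mulrC; lra.
Qed.

Lemma f_upper (L : R) (n : nat) : 0 <= L -> lipschitz_with g L -> (0 < n)%N ->
  forall y, f y <= f 0 + inner y (g 0) + L * (n.+1%:R / (2 * n%:R)) * inner y y.
Proof.
move=> L0 Lg n0 y.
have N0 : 0 < n%:R :> R by rewrite ltr0n.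
set N := n%:R in N0 *.
set G := inner y (g 0); set S := inner y y.
have S0 : 0 <= S by exact: inner_ge0.
have claim : forall m, (m <= n)%N -> f ((m%:R / N) *: y) <=
    f 0 + (m%:R / N) * G + L * (m%:R * (m%:R + 1) / (2 * N ^+ 2)) * S.
  elim=> [|m IH] mn.
    by rewrite !mul0r scale0r mulr0 mul0r addr0 addr0.
  have {IH} IH := IH (ltnW mn).
  rewrite -natr1.
  set A := m%:R in IH *.
  have A0 : 0 <= A by exact: ler0n.
  set xm := (A / N) *: y in IH; set xm1 := ((A + 1) / N) *: y.
  have gi := grad_ineq cf gf xm1 xm.
  have E1 : xm - xm1 = (- N^-1) *: y.
    by apply/rowP => i; rewrite /xm /xm1 !mxE; field; rewrite gt_eqF.
  rewrite E1 innerZl in gi.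
  have e1 : inner y (g xm1) = G + inner y (g xm1 - g 0).
    by rewrite innerBr /G; ring.
  have e2 : inner y (g xm1 - g 0) <= L * ((A + 1) / N) * S.
    apply: (le_trans (CS' _ _)).
    have := Lg xm1 0; rewrite subr0 /xm1 enormZ ger0_norm; last by rewrite divr_ge0 ?addr_ge0 ?ler01 // ltW.
    move=> H; have := ler_wpM2l (enorm_ge0 y) H.
    rewrite /S -enorm_sq => H2; apply: (le_trans H2).
    by rewrite le_eqVlt; apply/orP; left; apply/eqP; ring.
  have e3 : N^-1 * inner y (g xm1) <= N^-1 * (G + L * ((A + 1) / N) * S).
    by apply: ler_wpM2l; [rewrite invr_ge0 ltW | rewrite e1 lerD2l].
  have E : f 0 + A / N * G + L * (A * (A + 1) / (2 * N ^+ 2)) * S +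
           N^-1 * (G + L * ((A + 1) / N) * S) =
           f 0 + (A + 1) / N * G + L * ((A + 1) * (A + 1 + 1) / (2 * N ^+ 2)) * S.
    by field; rewrite gt_eqF.
  rewrite -E.
  move: gi; rewrite mulNr; lra.
have := claim n (leqnn n).
rewrite divff ?gt_eqF // scale1r mul1r.
have -> : N * (N + 1) / (2 * N ^+ 2) = n.+1%:R / (2 * N).
  by rewrite -natr1 -/N; field; rewrite gt_eqF.
done.
Qed.

End Prox.



Lemma quad_lb (R : realType) (c b t : R) : 0 < c -> - (b ^+ 2 / (4 * c)) <= c * t ^+ 2 - b * t.
Proof.
move=> c0; rewrite -subr_ge0.
have -> : c * t ^+ 2 - b * t - - (b ^+ 2 / (4 * c)) = (2 * c * t - b) ^+ 2 / (4 * c).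
  by field; rewrite gt_eqF.
by rewrite divr_ge0 ?sqr_ge0 // mulr_ge0 // ltW.
Qed.

Lemma quad_ub (R : realType) (c b t K : R) : 0 < c -> 0 <= b -> 0 <= t ->
  c * t ^+ 2 - b * t <= K -> t <= 1 + (`|K| + b) / c.
Proof.
move=> c0 b0 t0 H.
have Kn := ler_norm K.
have q0 : 0 <= (`|K| + b) / c by rewrite divr_ge0 ?addr_ge0 // ltW.
have [t1|t1] := leP t 1; first lra.
suff : t <= (`|K| + b) / c by lra.
rewrite ler_pdivlMr //.
have Kt : 0 <= `|K| * (t - 1) by rewrite mulr_ge0 // subr_ge0 ltW.
have : c * t * t <= (`|K| + b) * t.
  move: H; rewrite expr2 mulrA; lra.
by rewrite [c * t]mulrC ler_pM2r //; lra.
Qed.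

Section Env.
Variables (R : realType) (d : nat).
Local Notation V := 'rV[R]_d.
Implicit Types u v : V * V.

Lemma enorm2N (x : V * V) : enorm2 (- x) = enorm2 x.
Proof. by rewrite /enorm2 /= !innerNl !innerNr !opprK. Qed.

Lemma enorm2B (x y : V * V) : enorm2 (x - y) = enorm2 (y - x).
Proof. by rewrite -enorm2N opprB. Qed.

Variables (f3 : V -> \bar R) (gam M a : R) (b y0 : V).
Variables (w : V * V -> V) (s : V * V -> R).
Hypotheses (gam0 : 0 < gam) (f3N : forall y, f3 y != -oo%E)
  (Hy0 : f3 y0 \is a fin_num)
  (Hlow : forall y, ((- a - inner y b - M * inner y y)%:E <= f3 y)%E)
  (HM : M < (2 * gam)^-1)
  (Hw : exists Kw, forall u v, enorm (w u - w v) <= Kw * enorm2 (u - v))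
  (Hs : forall z0, exists Ks, forall u v, enorm2 (u - z0) < 1 ->
          enorm2 (v - z0) < 1 -> `|s u - s v| <= Ks * enorm2 (u - v)).

Definition Qf (y : V) z := (2 * gam)^-1 * inner y y - inner y (w z) + s z.
Definition Env z := ereal_inf [set (f3 y + (Qf y z)%:E)%E | y in [set: V]].

Let c := (2 * gam)^-1 - M.
Let c0 : 0 < c. Proof. by rewrite subr_gt0. Qed.

Lemma Qf_lb (y : V) z (ry : R) : f3 y = ry%:E ->
  c * enorm y ^+ 2 - (enorm b + enorm (w z)) * enorm y - a + s z <= ry + Qf y z.
Proof.
move=> Ey; have := Hlow y; rewrite Ey lee_fin => Hl.
have cb := CS' y b; have cw := CS' y (w z).
rewrite /Qf /c enorm_sq.
have := enorm_ge0 y; lra.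
Qed.

Lemma Env_lb z : ((- a + s z - (enorm b + enorm (w z)) ^+ 2 / (4 * c))%:E <= Env z)%E.
Proof.
apply/ereal_infP => _ [y _ <-].
case Ey: (f3 y) => [ry| |].
- rewrite -EFinD lee_fin.
  have := Qf_lb z Ey; have := quad_lb (enorm b + enorm (w z)) (enorm y) c0; lra.
- by rewrite leey.
- by have := f3N y; rewrite Ey.
Qed.

Lemma Env_ub z : (Env z <= f3 y0 + (Qf y0 z)%:E)%E.
Proof. by apply: ereal_inf_lbound; exists y0. Qed.

Lemma Env_fin z : Env z \is a fin_num.
Proof.
have /EFin_fin_numP [r0 E0] := Hy0.
rewrite fin_numElt; apply/andP; split.
  exact: lt_le_trans (ltNyr _) (Env_lb z).
by apply: le_lt_trans (Env_ub z) _; rewrite E0 -EFinD ltry.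
Qed.

Lemma Env_LL : locally_lipschitz (fun z => fine (Env z)).
Proof.
move=> z0.
have [Kw HKw] := Hw; have [Ks HKs] := Hs z0.
have /EFin_fin_numP [r0 E0] := Hy0.
have z0b : enorm2 (z0 - z0) < 1 by rewrite subrr enorm2_0 ltr01.
set W := enorm (w z0) + `|Kw|.
set Sb := `|s z0| + `|Ks|.
have Wb : forall u, enorm2 (u - z0) < 1 -> enorm (w u) <= W.
  move=> u hu; apply: le_trans (enormBle (w u) (w z0)) _; rewrite lerD2l.
  apply: le_trans (HKw u z0) _.
  have e0 := enorm2_ge0 (u - z0).
  apply: le_trans (ler_wpM2r e0 (ler_norm Kw)) _.
  by rewrite -[leRHS]mulr1 ler_wpM2l // ltW.
have Sbd : forall u, enorm2 (u - z0) < 1 -> `|s u| <= Sb.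
  move=> u hu; have := HKs u z0 hu z0b.
  have e0 := enorm2_ge0 (u - z0).
  have k1 := ler_wpM2r e0 (ler_norm Ks).
  have k2 : `|Ks| * enorm2 (u - z0) <= `|Ks| by rewrite -[leRHS]mulr1 ler_wpM2l // ltW.
  have := ler_normD (s z0) (s u - s z0); rewrite addrC subrK.
  rewrite /Sb; lra.
have beta0 : 0 <= enorm b + W by rewrite addr_ge0 ?enorm_ge0 // addr_ge0 ?enorm_ge0.
set beta := enorm b + W in beta0.
set U := r0 + (2 * gam)^-1 * inner y0 y0 + enorm y0 * W + Sb + 1.
set K0 := U + a + Sb.
set Rb := 1 + (`|K0| + beta) / c.
exists 1, (Rb * `|Kw| + `|Ks|); split; first exact: ltr01.
suff one : forall u v, enorm2 (u - z0) < 1 -> enorm2 (v - z0) < 1 ->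
    fine (Env u) - fine (Env v) <= (Rb * `|Kw| + `|Ks|) * enorm2 (u - v).
  move=> u v hu hv; rewrite ler_norml; apply/andP; split; last exact: one.
  by have := one v u hv hu; rewrite enorm2B; lra.
move=> u v hu hv.
have fu := Env_fin u; have fv := Env_fin v.
apply: (@eps_le _ _ _ 1) => // t t0 t1.
have [_ [y _ <-] Hy] := lb_ereal_inf_adherent t0 fv.
have Hy2 : (f3 y + (Qf y v)%:E < Env v + t%:E)%E := Hy; move: Hy2; rewrite -(fineK fv) => {Hy} Hy.
case Ey: (f3 y) => [ry| |]; rewrite Ey in Hy; last first.
- by have := f3N y; rewrite Ey.
- by move: Hy; rewrite -EFinD /= ltNge leey.
rewrite -!EFinD lte_fin in Hy.
have wv := Wb v hv; have sv := Sbd v hv.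
have tb : enorm y <= Rb.
  apply: quad_ub c0 beta0 (enorm_ge0 y) _.
  have lb := Qf_lb v Ey.
  have ub : fine (Env v) <= r0 + Qf y0 v.
    by have := Env_ub v; rewrite -(fineK fv) E0 -EFinD lee_fin.
  have Qy0 : Qf y0 v <= (2 * gam)^-1 * inner y0 y0 + enorm y0 * W + Sb.
    rewrite /Qf.
    have cs := CS y0 (w v).
    have k := ler_wpM2l (enorm_ge0 y0) wv.
    have := ler_norm (s v).
    have := ler_normr (inner y0 (w v)).
    have /andP[cs1 cs2] : - (enorm y0 * enorm (w v)) <= inner y0 (w v)
      <= enorm y0 * enorm (w v) by rewrite -ler_norml.
    lra.
  have bb : (enorm b + enorm (w v)) * enorm y <= beta * enorm y.
    by rewrite ler_wpM2r ?enorm_ge0 // lerD2l.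
  have := ler_norm (- s v); rewrite normrN.
  rewrite /K0 /U; lra.
have Eu : fine (Env u) <= ry + Qf y u.
  have : (Env u <= f3 y + (Qf y u)%:E)%E by apply: ereal_inf_lbound; exists y.
  by rewrite -(fineK fu) Ey -EFinD lee_fin.
have dQ : Qf y u - Qf y v <= (Rb * `|Kw| + `|Ks|) * enorm2 (u - v).
  have -> : Qf y u - Qf y v = inner y (w v - w u) + (s u - s v).
    by rewrite /Qf innerBr; ring.
  have e0 := enorm2_ge0 (u - v).
  have c1 := CS' y (w v - w u).
  have c2 := HKw v u; rewrite enorm2B in c2.
  have c3 : enorm y * enorm (w v - w u) <= Rb * (`|Kw| * enorm2 (u - v)).
    apply: ler_pM; rewrite ?enorm_ge0 //.
    by apply: le_trans c2 _; rewrite ler_wpM2r // ler_norm.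
  have c4 := HKs u v hu hv.
  have c5 : Ks * enorm2 (u - v) <= `|Ks| * enorm2 (u - v) by rewrite ler_wpM2r // ler_norm.
  have := ler_norm (s u - s v).
  rewrite mulrDl -mulrA; lra.
lra.
Qed.

End Env.



Section Final.
Variables (R : realType) (d : nat).
Local Notation V := 'rV[R]_d.

Definition LocLip (s : V * V -> R) := forall z0 : V * V, exists Ks, forall u v,
  enorm2 (u - z0) < 1 -> enorm2 (v - z0) < 1 -> `|s u - s v| <= Ks * enorm2 (u - v).

Lemma LocLipD s1 s2 : LocLip s1 -> LocLip s2 -> LocLip (fun z => s1 z + s2 z).
Proof.
move=> h1 h2 z0; have [K1 H1] := h1 z0; have [K2 H2] := h2 z0.
exists (K1 + K2) => u v hu hv.
have := H1 u v hu hv; have := H2 u v hu hv.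
have := ler_normD (s1 u - s1 v) (s2 u - s2 v).
have -> : s1 u + s2 u - (s1 v + s2 v) = s1 u - s1 v + (s2 u - s2 v) by ring.
rewrite mulrDl; lra.
Qed.

Lemma comp_loc (phi : V -> R) (X : V * V -> V) C0 C1 K : 0 <= C0 -> 0 <= C1 ->
  (forall a b, `|phi a - phi b| <= (C0 + C1 * (enorm a + enorm b)) * enorm (a - b)) ->
  (forall u v, enorm (X u - X v) <= K * enorm2 (u - v)) ->
  LocLip (fun z => phi (X z)).
Proof.
move=> C00 C10 Hphi HX z0.
set B := enorm (X z0) + `|K|.
have XB : forall u, enorm2 (u - z0) < 1 -> enorm (X u) <= B.
  move=> u hu; apply: le_trans (enormBle (X u) (X z0)) _; rewrite lerD2l.
  apply: le_trans (HX u z0) _.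
  have e0 := enorm2_ge0 (u - z0).
  apply: le_trans (ler_wpM2r e0 (ler_norm K)) _.
  by rewrite -[leRHS]mulr1 ler_wpM2l // ltW.
exists ((C0 + C1 * (B + B)) * `|K|) => u v hu hv.
have e0 := enorm2_ge0 (u - v).
apply: le_trans (Hphi _ _) _.
have h1 : C0 + C1 * (enorm (X u) + enorm (X v)) <= C0 + C1 * (B + B).
  by rewrite lerD2l ler_wpM2l // lerD // XB.
have h2 : enorm (X u - X v) <= `|K| * enorm2 (u - v).
  by apply: le_trans (HX u v) _; rewrite ler_wpM2r // ler_norm.
rewrite -mulrA; apply: ler_pM => //.
- by rewrite addr_ge0 // mulr_ge0 // addr_ge0 ?enorm_ge0.
- exact: enorm_ge0.
Qed.

Lemma phi_lip (f : V -> R) (g : V -> V) (L kap : R) :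
  convex_function setT f -> is_gradient f g -> 0 <= L -> lipschitz_with g L ->
  forall a b, `|(f a - inner a (g a) + kap * inner a a) - (f b - inner b (g b) + kap * inner b b)|
   <= (2 * enorm (g 0) + (2 * L + `|kap|) * (enorm a + enorm b)) * enorm (a - b).
Proof.
move=> cf gf L0 Lg a b.
have F := f_lip cf gf L0 Lg a b.
set e := enorm (a - b).
have e0 : 0 <= e := enorm_ge0 _.
have ga : enorm (g a) <= enorm (g 0) + L * enorm a.
  apply: le_trans (enormBle (g a) (g 0)) _; rewrite lerD2l.
  by have := Lg a 0; rewrite subr0.
have I1 : inner a (g a) - inner b (g b) = inner (a - b) (g a) + inner b (g a - g b).
  by rewrite innerBl innerBr; ring.
have n1 : `|inner a (g a) - inner b (g b)| <= e * (enorm (g 0) + L * enorm a) + enorm b * (L * e).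
  rewrite I1; apply: le_trans (ler_normD _ _) _; apply: lerD.
    by apply: le_trans (CS _ _) _; rewrite ler_wpM2l.
  by apply: le_trans (CS _ _) _; rewrite ler_wpM2l ?enorm_ge0 // Lg.
have n2 : `|kap * inner a a - kap * inner b b| <= `|kap| * (e * (enorm a + enorm b)).
  rewrite -mulrBr normrM ler_wpM2l // inner_sqB.
  by apply: le_trans (CS _ _) _; rewrite ler_wpM2l // enormD.
have -> : f a - inner a (g a) + kap * inner a a - (f b - inner b (g b) + kap * inner b b)
  = (f a - f b) - (inner a (g a) - inner b (g b)) + (kap * inner a a - kap * inner b b) by ring.
apply: le_trans (ler_normD _ _) _.
have := ler_normB (f a - f b) (inner a (g a) - inner b (g b)).
have eq1 : (2 * enorm (g 0) + (2 * L + `|kap|) * (enorm a + enorm b)) * e =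
  (enorm (g 0) + L * (enorm a + enorm b)) * e + (e * (enorm (g 0) + L * enorm a) + enorm b * (L * e))
  + `|kap| * (e * (enorm a + enorm b)) by ring.
move: F; rewrite -/e => F; rewrite eq1; lra.
Qed.

Lemma w_bound (gamma alpha L1 L2 e : R) (p1 q1 p2 q2 G1 H1 G2 H2 : 'rV[R]_d) :
  0 < gamma -> 0 < alpha -> 0 < L1 -> 0 < L2 -> 0 <= e ->
  enorm (p1 - q1) <= 1 * e -> enorm (p2 - q2) <= (alpha^-1 + 1) * e ->
  enorm (G1 - H1) <= L1 * enorm (p1 - q1) -> enorm (G2 - H2) <= L2 * enorm (p2 - q2) ->
  enorm (gamma^-1 *: (alpha *: p1 + (1 - alpha) *: p2) - G1 - G2
         - (gamma^-1 *: (alpha *: q1 + (1 - alpha) *: q2) - H1 - H2))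
  <= (gamma^-1 * (alpha * 1 + `|1 - alpha| * (alpha^-1 + 1)) + L1 * 1 + L2 * (alpha^-1 + 1)) * e.
Proof.
move=> ga0 al0 L10 L20 e0 D1 D2 Lg1 Lg2.
have -> : gamma^-1 *: (alpha *: p1 + (1 - alpha) *: p2) - G1 - G2
         - (gamma^-1 *: (alpha *: q1 + (1 - alpha) *: q2) - H1 - H2)
   = gamma^-1 *: (alpha *: (p1 - q1) + (1 - alpha) *: (p2 - q2)) - (G1 - H1) - (G2 - H2).
  by apply/rowP => i; rewrite !mxE; ring.
have G1b : enorm (G1 - H1) <= L1 * (1 * e).
  by apply: le_trans Lg1 _; rewrite ler_wpM2l // ltW.
have G2b : enorm (G2 - H2) <= L2 * ((alpha^-1 + 1) * e).
  by apply: le_trans Lg2 _; rewrite ler_wpM2l // ltW.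
have T1 : enorm (gamma^-1 *: (alpha *: (p1 - q1) + (1 - alpha) *: (p2 - q2)))
    <= gamma^-1 * (alpha * (1 * e) + `|1 - alpha| * ((alpha^-1 + 1) * e)).
  rewrite enormZ ger0_norm; last by rewrite invr_ge0 ltW.
  apply: ler_wpM2l; first by rewrite invr_ge0 ltW.
  apply: le_trans (enormD _ _) _; rewrite !enormZ (ger0_norm (ltW al0)).
  apply: lerD; first by rewrite ler_wpM2l // ltW.
  by rewrite ler_wpM2l.
have T2 := enormD (gamma^-1 *: (alpha *: (p1 - q1) + (1 - alpha) *: (p2 - q2)) - (G1 - H1))
   (- (G2 - H2)).
have T3 := enormD (gamma^-1 *: (alpha *: (p1 - q1) + (1 - alpha) *: (p2 - q2))) (- (G1 - H1)).
rewrite !enormN in T2 T3.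
have -> : (gamma^-1 * (alpha * 1 + `|1 - alpha| * (alpha^-1 + 1)) + L1 * 1 + L2 * (alpha^-1 + 1)) * e
  = gamma^-1 * (alpha * (1 * e) + `|1 - alpha| * ((alpha^-1 + 1) * e)) + L1 * (1 * e)
    + L2 * ((alpha^-1 + 1) * e) by ring.
lra.
Qed.

End Final.


Unset Implicit Arguments. Set Strict Implicit. Set Printing Implicit Defensive.

Theorem proposition2 (R : realType) (d : nat)
    (f1 f2 : 'rV[R]_d -> R) (f3 : 'rV[R]_d -> \bar R)
    (g1 g2 : 'rV[R]_d -> 'rV[R]_d) (L1 L2 alpha gamma : R) :
  convex_function setT f1 -> convex_function setT f2 ->
  is_gradient f1 g1 -> is_gradient f2 g2 ->
  0 < L1 -> 0 < L2 -> lipschitz_with g1 L1 -> lipschitz_with g2 L2 ->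
  proper_fun f3 -> lower_semicontinuous f3 ->
  (exists xs : 'rV[R]_d, forall y : 'rV[R]_d,
      ((f1 xs + f2 xs)%:E + f3 xs <= (f1 y + f2 y)%:E + f3 y)%E) ->
  0 < alpha -> 0 < gamma -> gamma < (L1 + L2)^-1 ->
  (forall z, ryu_env f1 f2 f3 g1 g2 alpha gamma z \is a fin_num) /\
  locally_lipschitz (fun z => fine (ryu_env f1 f2 f3 g1 g2 alpha gamma z)).
Proof.
move=> cf1 cf2 gf1 gf2 L10 L20 Lg1 Lg2 [f3N [y0 Hy0]] _ [xs Hxs] al0 ga0 gaL.
pose x1 := fun z : 'rV[R]_d * 'rV[R]_d => prox gamma f1 z.1.
pose x2 := fun z : 'rV[R]_d * 'rV[R]_d => prox (gamma / alpha) f2 (alpha^-1 *: z.2 + x1 z).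
pose w := fun z => gamma^-1 *: (alpha *: x1 z + (1 - alpha) *: x2 z) - g1 (x1 z) - g2 (x2 z).
pose s := fun z => (f1 (x1 z) - inner (x1 z) (g1 (x1 z)) + (alpha / (2 * gamma)) * inner (x1 z) (x1 z))
   + (f2 (x2 z) - inner (x2 z) (g2 (x2 z)) + ((1 - alpha) / (2 * gamma)) * inner (x2 z) (x2 z)).
have Eenv : forall z, ryu_env f1 f2 f3 g1 g2 alpha gamma z = Env f3 gamma w s z.
  move=> z; rewrite /ryu_env /Env; congr ereal_inf; apply: eq_imagel => y _.
  congr (f3 y + _%:E); rewrite /Qf /w /s /x2 /x1 /=.
  set p1 := prox gamma f1 z.1; set p2 := prox _ f2 _.
  rewrite !enorm_sq !innerBB !innerBl !innerBr innerZr innerDr !innerZr.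
  by field; rewrite gt_eqF.
have [rxs Exs] : exists rxs, f3 xs = rxs%:E.
  case E: (f3 xs) => [r| |]; [by exists r| |by have := f3N xs; rewrite E].
  have /EFin_fin_numP [r0 E0] := Hy0.
  by have := Hxs y0; rewrite E E0 -EFinD addey // leNgt ltry.
have kap1 : gamma * (L1 + L2) < 1.
  by move: gaL; rewrite -div1r ltr_pdivlMr // addr_gt0.
set kap := gamma * (L1 + L2) in kap1.
have kap0 : 0 < kap by rewrite mulr_gt0 // addr_gt0.
set q := kap / (1 - kap).
have q0 : 0 <= q by rewrite divr_ge0 // ?subr_ge0; apply: ltW.
set n := (Num.trunc q).+1.
have n0 : (0 < n)%N by [].
have qn : q < n%:R by rewrite -truncn_lt_nat.
set M := (L1 + L2) * (n.+1%:R / (2 * n%:R)).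
have HM : M < (2 * gamma)^-1.
  have N0 : 0 < n%:R :> R by rewrite ltr0n.
  have key : kap * (n%:R + 1) < n%:R.
    move: qn; rewrite /q ltr_pdivrMr ?subr_gt0 //; lra.
  rewrite -subr_lt0.
  have -> : M - (2 * gamma)^-1 = (kap * (n%:R + 1) - n%:R) / (2 * n%:R * gamma).
    by rewrite /M /kap -natr1; field; rewrite !gt_eqF.
  by rewrite pmulr_llt0 ?invr_gt0 ?mulr_gt0 // subr_lt0.
set a := f1 0 + f2 0 - (f1 xs + f2 xs + rxs).
set b := g1 0 + g2 0.
have Hlow : forall y, ((- a - inner y b - M * inner y y)%:E <= f3 y)%E.
  move=> y; case Ey: (f3 y) => [ry| |]; [|by rewrite leey|by have := f3N y; rewrite Ey].
  rewrite lee_fin; have := Hxs y; rewrite Exs Ey -!EFinD lee_fin => H.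
  have u1 := f_upper cf1 gf1 (ltW L10) Lg1 n0 y.
  have u2 := f_upper cf2 gf2 (ltW L20) Lg2 n0 y.
  rewrite /a /b /M innerDr; lra.
have ga' : 0 < gamma / alpha by rewrite divr_gt0.
have d1 : forall u v, enorm (x1 u - x1 v) <= 1 * enorm2 (u - v).
  move=> u v; rewrite mul1r; apply: le_trans (prox_nonexp cf1 gf1 _ _ ga0) _.
  exact: (enorm2_1 (u - v)).
have d2 : forall u v, enorm (x2 u - x2 v) <= (alpha^-1 + 1) * enorm2 (u - v).
  move=> u v; apply: le_trans (prox_nonexp cf2 gf2 _ _ ga') _.
  have -> : alpha^-1 *: u.2 + x1 u - (alpha^-1 *: v.2 + x1 v)
    = alpha^-1 *: (u.2 - v.2) + (x1 u - x1 v).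
    by apply/rowP => i; rewrite !mxE; ring.
  apply: le_trans (enormD _ _) _; rewrite enormZ ger0_norm; last by rewrite invr_ge0 ltW.
  have h2 : enorm (u.2 - v.2) <= enorm2 (u - v) := enorm2_2 (u - v).
  have h1 := d1 u v; rewrite mul1r in h1.
  have h0 := enorm2_ge0 (u - v).
  have : alpha^-1 * enorm (u.2 - v.2) <= alpha^-1 * enorm2 (u - v).
    by rewrite ler_wpM2l // invr_ge0 ltW.
  move=> h3; rewrite mulrDl mul1r; exact: lerD h3 h1.
have Hw : exists Kw, forall u v, enorm (w u - w v) <= Kw * enorm2 (u - v).
  exists (gamma^-1 * (alpha * 1 + `|1 - alpha| * (alpha^-1 + 1)) + L1 * 1 + L2 * (alpha^-1 + 1)).
  move=> u v; rewrite /w.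
  apply: (w_bound ga0 al0 L10 L20 (enorm2_ge0 (u - v)) (d1 u v) (d2 u v)).
    exact: Lg1.
  exact: Lg2.
have Hs : forall z0, exists Ks, forall u v, enorm2 (u - z0) < 1 ->
    enorm2 (v - z0) < 1 -> `|s u - s v| <= Ks * enorm2 (u - v).
  have := LocLipD
    (comp_loc (phi := fun p => f1 p - inner p (g1 p) + (alpha / (2 * gamma)) * inner p p)
       (mulr_ge0 (ler0n _ 2) (enorm_ge0 (g1 0)))
       (addr_ge0 (mulr_ge0 (ler0n _ 2) (ltW L10)) (normr_ge0 _))
       (@phi_lip _ _ _ _ _ _ cf1 gf1 (ltW L10) Lg1) d1)
    (comp_loc (phi := fun p => f2 p - inner p (g2 p) + ((1 - alpha) / (2 * gamma)) * inner p p)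
       (mulr_ge0 (ler0n _ 2) (enorm_ge0 (g2 0)))
       (addr_ge0 (mulr_ge0 (ler0n _ 2) (ltW L20)) (normr_ge0 _))
       (@phi_lip _ _ _ _ _ _ cf2 gf2 (ltW L20) Lg2) d2).
  by [].
split.
  by move=> z; rewrite Eenv; exact: (@Env_fin _ _ _ _ _ _ _ _ w s f3N Hy0 Hlow HM).
have -> : (fun z => fine (ryu_env f1 f2 f3 g1 g2 alpha gamma z)) =
          (fun z => fine (Env f3 gamma w s z)) by apply/funext => z; rewrite Eenv.
exact: (Env_LL f3N Hy0 Hlow HM Hw Hs).
Qed.
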